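(* Let $\mathcal C$ be a subcategory of the category of groups, let $\mathcal H$ be a class of maps for $\mathcal C$, and let $\Gamma$ be an $\mathcal H$-invariant subgroup function on $\mathcal C$, with stabilization $\Gamma_S$. Then: (1) for each $A\in\mathcal C$, $\Gamma(A)$ is a normal subgroup of $\Gamma_S(A)$; (2) every $f:A\to B$ in $\mathcal H$ induces a monomorphism $A/\Gamma_S(A)\hookrightarrow B/\Gamma_S(B)$; (3) if $\widetilde\Gamma$ is any $\mathcal H$-invariant subgroup function on $\mathcal C$ such that $\Gamma(A)\subset\widetilde\Gamma(A)$ for all $A\in\mathcal C$ and every $f:A\to B$ in $\mathcal H$ induces a monomorphism $A/\widetilde\Gamma(A)\hookrightarrow B/\widetilde\Gamma(B)$, then $\Gamma_S(A)\subset\widetilde\Gamma(A)$ for all $A\in\mathcal C$.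
   Context: A subgroup function on $\mathcal C$ assigns to each $A\in\mathcal C$ a normal subgroup $\Gamma(A)\trianglelefteq A$. A class of maps for $\mathcal C$ is a set $\mathcal H$ of morphisms of $\mathcal C$ that contains all isomorphisms, is closed under composition, and is closed under nudge-outs: whenever $f:A\to B$ and $f':A\to B'$ lie in $\mathcal H$, there exist a group $C$ and $g:B\to C$, $g':B'\to C$ in $\mathcal H$ with $g\circ f=g'\circ f'$. $\Gamma$ is $\mathcal H$-invariant if $f(\Gamma(A))\subset\Gamma(B)$ for every $f:A\to B$ in $\mathcal H$. The stabilization of $\Gamma$ with respect to $\mathcal H$ is $\Gamma_S(A)=\{a\in A\mid \exists f:A\to B,\ f\in\mathcal H,\ f(a)\in\Gamma(B)\}$. *)

(* Defs.v *)
Set Implicit Arguments.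
Unset Strict Implicit.

Record Grp := {
  gcar :> Type;
  gmul : gcar -> gcar -> gcar;
  ginv : gcar -> gcar;
  gone : gcar;
  gmulA : forall x y z, gmul x (gmul y z) = gmul (gmul x y) z;
  gmul1 : forall x, gmul gone x = x;
  gmulV : forall x, gmul (ginv x) x = gone
}.

Arguments gmul {g}. Arguments ginv {g}. Arguments gone {g}.

Definition is_subgroup (G : Grp) (S : G -> Prop) : Prop :=
  S gone /\ (forall x y, S x -> S y -> S (gmul x y)) /\ (forall x, S x -> S (ginv x)).

Definition is_normal_subgroup (G : Grp) (S : G -> Prop) : Prop :=
  is_subgroup S /\ (forall g x, S x -> S (gmul (gmul (ginv g) x) g)).

Definition normal_subgroup_of (G : Grp) (N H : G -> Prop) : Prop :=
  is_subgroup H /\ is_subgroup N /\ (forall x, N x -> H x) /\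
  (forall h x, H h -> N x -> N (gmul (gmul (ginv h) x) h)).

Definition is_hom (A B : Grp) (f : A -> B) : Prop :=
  forall x y, f (gmul x y) = gmul (f x) (f y).

Definition is_subcategory (Ob : Grp -> Prop)
  (Mor : forall A B : Grp, (A -> B) -> Prop) : Prop :=
  (forall A B f, Mor A B f -> Ob A /\ Ob B /\ is_hom f) /\
  (forall A, Ob A -> Mor A A (fun x => x)) /\
  (forall A B C f g, Mor A B f -> Mor B C g -> Mor A C (fun x => g (f x))).
Arguments is_hom {A B}.

Definition is_iso (Mor : forall A B : Grp, (A -> B) -> Prop)
  (A B : Grp) (f : A -> B) : Prop :=
  Mor A B f /\ exists g : B -> A, Mor B A g /\
     (forall a, g (f a) = a) /\ (forall b, f (g b) = b).

Arguments is_iso Mor A B f : clear implicits.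

Definition class_of_maps (Ob : Grp -> Prop)
  (Mor : forall A B : Grp, (A -> B) -> Prop)
  (H : forall A B : Grp, (A -> B) -> Prop) : Prop :=
  (forall A B f, H A B f -> Mor A B f) /\
  (forall A B f, is_iso Mor A B f -> H A B f) /\
  (forall A B C f g, H A B f -> H B C g -> H A C (fun x => g (f x))) /\
  (forall (A B B' : Grp) (f : A -> B) (f' : A -> B'), H A B f -> H A B' f' ->
     exists C : Grp, exists (g : B -> C) (g' : B' -> C),
       Ob C /\ H B C g /\ H B' C g' /\ forall a, g (f a) = g' (f' a)).

Definition subgroup_function (Ob : Grp -> Prop)
  (Gam : forall A : Grp, A -> Prop) : Prop :=
  forall A, Ob A -> is_normal_subgroup (Gam A).

Definition H_invariant (H : forall A B : Grp, (A -> B) -> Prop)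
  (Gam : forall A : Grp, A -> Prop) : Prop :=
  forall A B f, H A B f -> forall a, Gam A a -> Gam B (f a).

Definition stabilization (H : forall A B : Grp, (A -> B) -> Prop)
  (Gam : forall A : Grp, A -> Prop) (A : Grp) (a : A) : Prop :=
  exists (B : Grp) (f : A -> B), H A B f /\ Gam B (f a).

(* f : A -> B (a homomorphism) induces a monomorphism A/N -> B/M:
   the induced map aN |-> f(a)M is well defined (f(N) ⊆ M) and has trivial
   kernel (f(a) ∈ M implies a ∈ N). *)
Definition induces_mono (A B : Grp) (f : A -> B) (N : A -> Prop) (M : B -> Prop) : Prop :=
  (forall a, N a -> M (f a)) /\ (forall a, M (f a) -> N a).
Arguments stabilization H Gam A a : clear implicits.

(* Main.v *)
Require Import Defs.

Section G.
Variable G : Grp.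
Lemma idem1 (x : G) : gmul x x = x -> x = gone.
Proof. intro E. transitivity (gmul (gmul (ginv x) x) x). rewrite gmulV, gmul1; reflexivity.
 rewrite <- gmulA, E, gmulV. reflexivity. Qed.
Lemma mulrV (x : G) : gmul x (ginv x) = gone.
Proof. apply idem1. rewrite gmulA. rewrite <- (gmulA x (ginv x) x), gmulV.
 rewrite <- gmulA, gmul1. reflexivity. Qed.
Lemma mulr1 (x : G) : gmul x gone = x.
Proof. rewrite <- (gmulV x), gmulA, mulrV, gmul1. reflexivity. Qed.
Lemma linv (x y : G) : gmul y x = gone -> y = ginv x.
Proof. intro E. rewrite <- (mulr1 y), <- (mulrV x), gmulA, E, gmul1. reflexivity. Qed.
End G.

Lemma hom1 (A B : Grp) (f : A -> B) : is_hom f -> f gone = gone.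
Proof. intro h. apply idem1. rewrite <- h, gmul1. reflexivity. Qed.
Lemma homV (A B : Grp) (f : A -> B) : is_hom f -> forall a, f (ginv a) = ginv (f a).
Proof. intros h a. apply linv. rewrite <- h, gmulV. apply hom1; exact h. Qed.

Theorem theorem2p10 (Ob : Grp -> Prop) (Mor : forall A B : Grp, (A -> B) -> Prop)
  (HC : is_subcategory Ob Mor)
  (H : forall A B : Grp, (A -> B) -> Prop) (HH : class_of_maps Ob Mor H)
  (Gam : forall A : Grp, A -> Prop) (HG : subgroup_function Ob Gam)
  (HGinv : H_invariant H Gam) :
  (forall A, Ob A -> normal_subgroup_of (Gam A) (stabilization H Gam A)) /\
  (forall A B f, H A B f ->
     induces_mono f (stabilization H Gam A) (stabilization H Gam B)) /\
  (forall Gt : forall A : Grp, A -> Prop,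
     subgroup_function Ob Gt -> H_invariant H Gt ->
     (forall A, Ob A -> forall a, Gam A a -> Gt A a) ->
     (forall A B f, H A B f -> induces_mono f (Gt A) (Gt B)) ->
     forall A, Ob A -> forall a, stabilization H Gam A a -> Gt A a).
Proof.
  destruct HC as [CM [Cid Ccomp]].
  destruct HH as [HM [Hiso [Hcomp Hnudge]]].
  assert (Hid : forall A, Ob A -> H A A (fun x => x)).
  { intros A oA. apply Hiso. split. apply Cid; exact oA.
    exists (fun x => x). split. apply Cid; exact oA. split; reflexivity. }
  assert (Hinfo : forall A B f, H A B f -> Ob A /\ Ob B /\ is_hom f).
  { intros A B f h. apply CM, HM, h. }
  split; [|split].
  - intros A oA. destruct (HG A oA) as [[G1 [GM GV]] GN].
    split; [|split; [|split]].
    + split; [|split].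
      * exists A, (fun x => x). split; [apply Hid; exact oA | exact G1].
      * intros x y [B [f [hf Gx]]] [B' [f' [hf' Gy]]].
        destruct (Hnudge _ _ _ f f' hf hf') as [C [g [g' [oC [hg [hg' E]]]]]].
        exists C, (fun x => g (f x)). split. apply Hcomp; assumption.
        destruct (Hinfo _ _ _ hf) as [_ [_ homf]].
        destruct (Hinfo _ _ _ hg) as [_ [_ homg]].
        rewrite homf, homg. destruct (HG C oC) as [[_ [CM' _]] _].
        apply CM'. apply (HGinv _ _ _ hg); exact Gx.
        rewrite E. apply (HGinv _ _ _ hg'); exact Gy.
      * intros x [B [f [hf Gx]]]. exists B, f. split; [exact hf|].
        destruct (Hinfo _ _ _ hf) as [_ [oB homf]].
        rewrite (@homV _ _ f homf). destruct (HG B oB) as [[_ [_ BV]] _]. apply BV; exact Gx.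
    + split; [exact G1|split; assumption].
    + intros x Gx. exists A, (fun x => x). split; [apply Hid; exact oA | exact Gx].
    + intros h x _ Gx. apply GN; exact Gx.
  - intros A B f hf. split.
    + intros a [C [k [hk Gk]]].
      destruct (Hnudge _ _ _ f k hf hk) as [D [g [g' [oD [hg [hg' E]]]]]].
      exists D, g. split; [exact hg|]. rewrite E. apply (HGinv _ _ _ hg'); exact Gk.
    + intros a [C [k [hk Gk]]]. exists C, (fun x => k (f x)). split.
      apply Hcomp; assumption. exact Gk.
  - intros Gt _ _ sub mono A oA a [B [f [hf Gf]]].
    destruct (Hinfo _ _ _ hf) as [_ [oB _]].
    apply (proj2 (mono _ _ _ hf)). apply sub; assumption.
Qed.
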